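(* Let $Q$ be a prime and $\lambda\in\mathbb{N}$ a statistical security parameter. Let $E_1,\dots,E_m$ be encryption functions of an additively homomorphic encryption scheme under $m$ keys of Alice with plaintext moduli $q_1,\dots,q_m$ (pairwise coprime), supporting homomorphic addition of ciphertexts and multiplication of a ciphertext by a plaintext constant modulo $q_i$. If $m=1$ then $q_1=Q$; if $m>1$ then $Q'=\prod_{i=1}^m q_i > Q^2 2^\lambda$. Consider the protocol: Alice picks $s_A\in\mathbb{F}_Q$ uniformly and sends $c_i=E_i(s_A\bmod q_i)$ for $1\le i\le m$. Bob picks $s_B\in\mathbb{F}_Q$ and $r_B\in\mathbb{F}_Q^*$ uniformly, and $u$ uniformly in $\{0,\dots,2^\lambda-1\}$ if $m>1$ (else $u=0$), and returns $d_i=(c_i+E_i(s_B))\cdot((r_B^{-1}\bmod Q)\bmod q_i)+E_i(uQ\bmod q_i)$. Alice decrypts all $d_i$, recovers (by the Chinese Remainder Theorem if $m>1$) the value $v\in\mathbb{Z}_{Q'}$ (with $Q'=Q$ if $m=1$), and sets $r_A=v\bmod Q$. Then the protocol is correct: $r_Ar_B=s_A+s_B$ in $\mathbb{F}_Q$.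
   Context: Elements of $\mathbb{F}_Q$ are represented by integers in $\{0,\dots,Q-1\}$; $r_B^{-1}\bmod Q$ is the inverse of $r_B$ in $\mathbb{F}_Q$; $\mathbb{F}_Q^*=\mathbb{F}_Q\setminus\{0\}$. Operations on ciphertexts $E_i(\cdot)$ denote the corresponding homomorphic operations, so $d_i$ decrypts to $((s_A+s_B)(r_B^{-1}\bmod Q)+uQ)\bmod q_i$. *)

(* Defs.v *)
From HB Require Import structures.
From mathcomp Require Import all_boot all_algebra.
Set Implicit Arguments. Unset Strict Implicit. Unset Printing Implicit Defensive.

(* Plaintexts are natural numbers; the plaintext space of a
   key with modulus q is Z_q, represented by {0,...,q-1}. *)

Record AHE (q : nat) := {
  ctxt : Type;
  rnd : Type;
  enc : rnd -> nat -> ctxt;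
  dec : ctxt -> nat;
  hadd : ctxt -> ctxt -> ctxt;
  hmul : ctxt -> nat -> ctxt;
  dec_enc : forall r x, dec (enc r x) = x %% q;
  dec_hadd : forall a b, dec (hadd a b) = (dec a + dec b) %% q;
  dec_hmul : forall a k, dec (hmul a k) = (dec a * k) %% q
}.

Definition invQ (Q r : nat) : nat := nat_of_ord ((inZp r : 'F_Q)^-1)%R.

(* Main.v *)
Require Import Defs.
From mathcomp Require Import all_boot all_algebra.
From mathcomp Require Import zify.
Lemma crt_seq (m : nat) (q : 'I_m -> nat) (Hcop : forall i j : 'I_m, i != j -> coprime (q i) (q j)) x y :
  (forall i, x = y %[mod q i]) -> forall s : seq 'I_m, uniq s -> x = y %[mod \prod_(i <- s) q i].
Proof.
move=> H; elim=> [|a s IH] /=; first by rewrite big_nil !modn1.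
case/andP=> Ha Hs; rewrite big_cons; apply/eqP; rewrite chinese_remainder.
  by rewrite (IH Hs) eqxx andbT H.
elim: s Ha {IH Hs} => [|b s IHs]; first by rewrite big_nil coprimen1.
rewrite inE negb_or big_cons coprimeMr => /andP[Hab Has].
by rewrite IHs // Hcop // eq_sym.
Qed.
Lemma crt_all (m : nat) (q : 'I_m -> nat) (Hcop : forall i j : 'I_m, i != j -> coprime (q i) (q j)) x y :
  (forall i, x = y %[mod q i]) -> x = y %[mod \prod_(i < m) q i].
Proof. by move=> H; rewrite -(big_map (fun i : 'I_m => i) xpredT) /=; apply: crt_seq => //; rewrite map_id; exact: index_enum_uniq. Qed.
Lemma inv_ok Q r : prime Q -> 0 < r < Q -> invQ Q r * r = 1 %[mod Q].
Proof.
move=> HQ /andP[r0 rQ].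
have Hn : (inZp r : 'F_Q) != 0%R.
  apply/eqP=> /(congr1 val) /=. rewrite Fp_cast // modn_small //. by move=> E; rewrite E in r0.
have := GRing.mulVf Hn. move/(congr1 val) => /=. rewrite /invQ.
move: (nat_of_ord _) => k. have NQ := Fp_cast HQ. move: (Zp_trunc _) NQ => t ->.
move=> E. by rewrite -modnMmr E modn_small // prime_gt1.
Qed.
Lemma bound_aux Q t : 1 < Q -> 1 < t -> (2 * Q - 2) * (Q - 1) + (t - 1) * Q <= Q ^ 2 * t.
Proof. case: Q => [|[|p]] // _; case: t => [|[|s]] // _. nia. Qed.

Theorem proposition1
  (Q lambda m : nat) (q : 'I_m -> nat) (S : forall i : 'I_m, AHE (q i))
  (HQ : prime Q) (Hm : 0 < m)
  (Hcop : forall i j : 'I_m, i != j -> coprime (q i) (q j))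
  (Hm1 : m = 1 -> forall i : 'I_m, q i = Q)
  (Hmgt : 1 < m -> Q ^ 2 * 2 ^ lambda < \prod_(i < m) q i)
  (Hlam : 1 < m -> 0 < lambda)
  (* Alice's and Bob's random choices *)
  (sA sB rB u : nat)
  (HsA : sA < Q) (HsB : sB < Q) (HrB : 0 < rB < Q)
  (Hu : if 1 < m then u < 2 ^ lambda else u == 0)
  (* encryption randomness *)
  (ra rb rc : forall i : 'I_m, rnd (S i))
  (* Alice's CRT recovery: v is the element of Z_{Q'} matching all decryptions *)
  (v : nat) :
  let c := fun i : 'I_m => enc (ra i) (sA %% q i) in
  let d := fun i : 'I_m =>
    hadd (hmul (hadd (c i) (enc (rb i) sB)) (invQ Q rB %% q i))
         (enc (rc i) ((u * Q) %% q i)) in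
  v < \prod_(i < m) q i ->
  (forall i : 'I_m, v %% q i = dec (d i)) ->
  let rA := v %% Q in
  rA * rB = sA + sB %[mod Q].
Proof.
move=> c d Hv Hdec rA.
set I := invQ Q rB.
set W := (sA + sB) * I + u * Q.
have HI : I < Q by rewrite /I /invQ -[X in _ < X](Fp_cast HQ) ltn_ord.
have Hmod : forall i, v = W %[mod q i].
  move=> i; rewrite Hdec /d /c !dec_hadd !dec_hmul !dec_hadd !dec_enc.
  by rewrite !modn_mod !modnDm -modnDml modnMm modnDml.
have Hkey : v = W %[mod Q].
  case: (ltnP 1 m) => Hm2.
    have Hb : W < \prod_(i < m) q i.
      apply: (leq_trans _ (Hmgt Hm2)).
      move: (Hlam Hm2) Hu; rewrite Hm2 => Hl Hu'.
      have t2 : 2 <= 2 ^ lambda by rewrite -{1}(expn1 2) leq_exp2l.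
      move: (2 ^ lambda) t2 Hu' => t t2 Hut.
      have Q2 := prime_gt1 HQ.
      have h1 : (sA + sB) * I <= (2 * Q - 2) * (Q - 1) by apply: leq_mul; lia.
      have h2 : u * Q <= (t - 1) * Q by apply: leq_mul; lia.
      rewrite /W; apply: leq_trans (leq_add h1 h2) _.
      exact: bound_aux.
    have := @crt_all _ _ Hcop _ _ Hmod.
    by move=> E; rewrite !modn_small // in E; rewrite E.
  have m1 : m = 1 by apply/eqP; rewrite eqn_leq Hm2.
  have := Hmod (Ordinal (Hm : 0 < m)).
  by rewrite (Hm1 m1).
rewrite /rA. rewrite Hkey modnMml /W mulnDl -mulnA -modnDm.
rewrite -[u * Q * rB]mulnA [Q * rB]mulnC [u * (rB * Q)]mulnA modnMl addn0 -modnMmr inv_ok // modnMmr. by rewrite muln1 modn_mod.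
Qed.
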